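(* Let $n\ge7$ and let $p$ be an odd prime with $p+3\le n$. In the symmetric group $\mathfrak S_n$ put $a=(1,p+2,p+1)(2,p+3)$ and $c=(1,2,\dots,p)(p+1,p+2,\dots,n)$. Then: (1) there is no automorphism $\varphi$ of $\mathfrak S_n$ with $\varphi(a)=a^{-1}$ and $\varphi(c)=c^{-1}$; (2) $\mathfrak S_n=\langle a,c\rangle$. *)

(* Defs.v *)
From HB Require Import structures.
From mathcomp Require Import all_boot all_fingroup.
Set Implicit Arguments. Unset Strict Implicit. Unset Printing Implicit Defensive.

(* Points 1..n of the paper are the ordinals 0..n-1 of 'I_n. *)
Local Open Scope group_scope.

(* transposition of the (0-based) points x and y of 'I_n
   (identity if a point is out of range; never happens under the
   hypotheses of the theorem) *)
Definition tp (n : nat) (x y : nat) : 'S_n :=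
  match insub x, insub y with
  | Some i, Some j => tperm i j
  | _, _ => 1
  end.

(* the cycle (x0, x1, ..., xk) : x0 -> x1 -> ... -> xk -> x0.
   In MathComp, (s * t) x = t (s x), so
   tperm x0 x1 * tperm x0 x2 * ... * tperm x0 xk is this cycle. *)
Definition cyc (n : nat) (s : seq nat) : 'S_n :=
  match s with
  | [::] => 1
  | x0 :: t => \prod_(k <- t) tp n x0 k
  end.

(* a = (1, p+2, p+1)(2, p+3)  in 1-based notation *)
Definition elt_a (n p : nat) : 'S_n :=
  cyc n [:: 0%N; p.+1; p] * cyc n [:: 1%N; p.+2].

(* c = (1, 2, ..., p)(p+1, ..., n)  in 1-based notation *)
Definition elt_c (n p : nat) : 'S_n :=
  cyc n (iota 0%N p) * cyc n (iota p (n - p)).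

(* Main.v *)
Require Import Defs.
From HB Require Import structures.
From mathcomp Require Import all_boot all_fingroup zify.
Set Implicit Arguments. Unset Strict Implicit. Unset Printing Implicit Defensive.
Local Open Scope group_scope.

Lemma tpE n x y (i : 'I_n) : x < n -> y < n ->
  (tp n x y i : nat) = if nat_of_ord i == x then y else if nat_of_ord i == y then x else nat_of_ord i.
Proof.
move=> hx hy; rewrite /tp insubT insubT /=.
case: tpermP => [e|e|h1 h2].
- by rewrite e /= eqxx.
- by rewrite e /=; case: eqP => [->|_] //; rewrite eqxx.
case: eqP => [e|_]; first by case: h1; apply: val_inj.
by case: eqP => [e|_] //; case: h2; apply: val_inj.
Qed.

Ltac brute :=
  repeat (match goal with |- context [if ?b then _ else _] =>
     lazymatch b with context [if _ then _ else _] => fail | _ =>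
     let H := fresh "H" in case: (boolP b) => H end end);
  try lia.

Lemma prod_iota n x k (i : 'I_n) : x + k < n ->
  ((\prod_(j <- iota x.+1 k) tp n x j)%g i : nat) =
  if (x <= i <= x + k) then (if nat_of_ord i == x + k then x else (nat_of_ord i).+1) else nat_of_ord i.
Proof.
elim: k => [|k IH] hk.
  rewrite big_nil perm1 addn0; case: (boolP (x <= i <= x)) => h //.
  have e : nat_of_ord i = x by lia.
  by rewrite e ?eqxx.
rewrite (_ : iota x.+1 k.+1 = rcons (iota x.+1 k) (x.+1 + k)); last by rewrite -cats1 -(iotaD x.+1 k 1) addn1.
rewrite big_rcons /= permM tpE; [|lia|lia].
rewrite IH; last lia.
brute.
Qed.

Definition fc n p (i : nat) : nat :=
  if i < p then (if i.+1 == p then 0 else i.+1)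
  else (if i.+1 == n then p else i.+1).

Lemma cE n p (i : 'I_n) : 0 < p -> p < n ->
  (elt_c n p i : nat) = fc n p i.
Proof.
move=> hp hpn; rewrite /elt_c permM.
case: p hp hpn => // p _ hpn.
have [m hm] : exists m, n - p.+1 = m.+1 by exists (n - p.+1).-1; lia.
rewrite hm /cyc /= prod_iota; last lia.
rewrite prod_iota; last lia.
have := ltn_ord i; rewrite /fc; brute.
Qed.

Definition fa p (i : nat) : nat :=
  if i == 0 then p.+1 else if i == p.+1 then p else if i == p then 0
  else if i == 1%N then p.+2 else if i == p.+2 then 1%N else i.

Lemma aE n p (i : 'I_n) : 2 <= p -> p.+2 < n ->
  (elt_a n p i : nat) = fa p i.
Proof.
move=> hp hpn; rewrite /elt_a /cyc /= !big_cons !big_nil !mulg1 !permM.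
rewrite !tpE; try lia.
rewrite /fa; brute.
Qed.

Section Main.
Variables (n p : nat).
Hypotheses (hp3 : 3 <= p) (hpn : p + 3 <= n.+1).
Local Notation N := n.+1.
Local Notation a := (elt_a N p).
Local Notation c := (elt_c N p).
Local Notation I x := (@inord n x).

Lemma tI x y z : x < N -> y < N -> z < N ->
  tperm (I x) (I y) (I z) = I (if z == x then y else if z == y then x else z).
Proof.
move=> hx hy hz; apply: val_inj => /=; rewrite [RHS]inordK; last by brute.
case: tpermP => [e|e|h1 h2].
- have ez : z = x by move/(congr1 val): e; rewrite /= !inordK.
  by rewrite ez eqxx inordK.
- have ez : z = y by move/(congr1 val): e; rewrite /= !inordK.
  by rewrite ez inordK //; case: eqP => [->|_]; rewrite ?eqxx.
rewrite inordK //; case: eqP => [e|_]; first by case: h1; rewrite e.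
by case: eqP => [e|_] //; case: h2; rewrite e.
Qed.

Lemma tv x y (i : 'I_N) : x < N -> y < N ->
  (tperm (I x) (I y) i : nat) = if (i : nat) == x then y else if (i:nat) == y then x else i.
Proof.
move=> hx hy; have hi := ltn_ord i.
rewrite -{1}(inord_val i) tI // inordK //; brute.
Qed.

Lemma cI x : x < N -> c (I x) = I (fc N p x).
Proof.
move=> hx; apply: val_inj => /=; rewrite cE; try lia.
rewrite !inordK //; rewrite /fc; brute.
Qed.

Lemma aI x : x < N -> a (I x) = I (fa p x).
Proof.
move=> hx; apply: val_inj => /=; rewrite aE; try lia.
rewrite !inordK //; rewrite /fa; brute.
Qed.

Lemma a3 : a ^+ 3 = tperm (I 1) (I p.+2).
Proof.
apply/permP => i; rewrite permX /=; apply: val_inj => /=.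
rewrite tv; try lia.
rewrite !aE; try lia.
have := ltn_ord i; rewrite /fa; brute.
Qed.

Lemma cinv x y : x < N -> y < N -> fc N p y = x -> c^-1 (I x) = I y.
Proof. by move=> hx hy e; rewrite -e -cI // permK. Qed.

Lemma ainv x y : x < N -> y < N -> fa p y = x -> a^-1 (I x) = I y.
Proof. by move=> hx hy e; rewrite -e -aI // permK. Qed.

Lemma x_def : tperm (I 0) (I p.+1) = (a ^+ 3) ^ c^-1.
Proof.
rewrite a3 tpermJ (@cinv 1 0) ?(@cinv p.+2 p.+1) //; try lia.
- rewrite /fc; brute.
- rewrite /fc; brute.
Qed.


Lemma xa2 : (tperm (I 0) (I p.+1) * a) ^+ 2 = 1.
Proof.
apply/permP => i; rewrite permX !iterS /iter !(permM (tperm (I 0) (I p.+1)) a) perm1; apply: ord_inj.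
have hi := ltn_ord i.
rewrite aE; try lia. rewrite tv; try lia. rewrite aE; try lia. rewrite tv; try lia.
rewrite /fa; brute.
Qed.

Definition fainv (i : nat) : nat :=
  if i == p.+1 then 0 else if i == p then p.+1 else if i == 0 then p
  else if i == p.+2 then 1%N else if i == 1%N then p.+2 else i.

Lemma ainvE (i : 'I_N) : (a^-1 i : nat) = fainv i.
Proof.
have e : fa p (a^-1 i) = i by rewrite -aE ?permKV //; lia.
have hj := ltn_ord (a^-1 i).
rewrite -e /fainv /fa; move: hj; brute.
Qed.

Lemma part1 : ~ exists phi : {perm {perm 'I_N}},
       [/\ phi \in Aut [set: {perm 'I_N}], phi a = a^-1 & phi c = c^-1].
Proof.
case=> phi [Aphi pa pc].
have fE : forall x, autm_morphism Aphi x = phi x.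
  by move=> x; have := autmE Aphi; move=> e; exact: (congr1 (fun g => g x) e).
have h : autm Aphi ((tperm (I 0) (I p.+1) * a) ^+ 2) = 1 by rewrite xa2 morph1.
rewrite morphX ?inE // morphM ?inE // in h.
rewrite {1}x_def morphJ ?inE // morphX ?inE // morphV ?inE // !fE pa pc invgK in h.
rewrite expgVn a3 tpermV tpermJ !cI in h; try lia.
move/permP/(_ (I 0)): h; rewrite permX !iterS /iter !permM perm1 => /(congr1 (@nat_of_ord N)).
rewrite ainvE tv; [|rewrite /fc; brute|rewrite /fc; brute].
rewrite ainvE tv; [|rewrite /fc; brute|rewrite /fc; brute].
rewrite !inordK; try lia.
rewrite /fc /fainv; brute.
Qed.

Definition T x y := tperm (I x) (I y) \in <<[set a; c]>>.
Definition sw (u v z : nat) : nat := if z == u then v else if z == v then u else z.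

Lemma aG : a \in <<[set a; c]>>.
Proof. by rewrite mem_gen // !inE eqxx. Qed.
Lemma cG : c \in <<[set a; c]>>.
Proof. by rewrite mem_gen // !inE eqxx orbT. Qed.

Lemma Tcong x y x' y' : T x y -> x = x' -> y = y' -> T x' y'.
Proof. by move=> h <- <-. Qed.

Lemma Tsym x y : T x y -> T y x.
Proof. by rewrite /T tpermC. Qed.

Lemma Trefl x : T x x.
Proof. by rewrite /T tperm1 group1. Qed.

Lemma cjA x y : x < N -> y < N -> T x y -> T (fa p x) (fa p y).
Proof. by move=> hx hy; rewrite /T -!aI // -tpermJ; move=> h; rewrite groupJ // aG. Qed.

Lemma cjC x y : x < N -> y < N -> T x y -> T (fc N p x) (fc N p y).
Proof. by move=> hx hy; rewrite /T -!cI // -tpermJ; move=> h; rewrite groupJ // cG. Qed.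

Lemma cjT u v x y : u < N -> v < N -> x < N -> y < N -> T u v -> T x y ->
  T (sw u v x) (sw u v y).
Proof. by move=> hu hv hx hy huv; rewrite /T /sw -!tI // -tpermJ => h; rewrite groupJ. Qed.

Lemma allT : forall x y, x < N -> y < N -> T x y.
Proof.
have h1 : T 1 p.+2 by rewrite /T -a3 groupX // aG.
have h2 : T 0 p.+1 by rewrite /T x_def groupJ ?groupV ?groupX ?aG ?cG.
have h3 : T p.+1 p.
  apply: Tcong (cjA _ _ h2) _ _; try lia; rewrite /fa; brute.
have S4 : forall j, p + j.+1 < N -> T (p + j) (p + j).+1.
  elim=> [|j IH] hj; first by apply: Tsym; apply: Tcong h3 _ _; lia.
  apply: Tcong (cjC _ _ (IH _)) _ _; try lia; rewrite /fc; brute.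
have S5 : forall k i, p <= i -> i + k.+1 < N -> T i (i + k.+1).
  elim=> [|k IH] i hi hk.
    apply: Tcong (S4 (i - p) _) _ _; lia.
  apply: Tcong (cjT _ _ _ _ (S4 (i + k.+1 - p) _) (IH i _ _)) _ _; try lia;
    rewrite /sw; brute.
have S5' : forall i j, p <= i -> p <= j -> i < N -> j < N -> T i j.
  move=> i j hi hj hiN hjN.
  case: (ltngtP i j) => hij.
  - apply: Tcong (S5 (j - i).-1 i _ _) _ _; lia.
  - apply: Tsym; apply: Tcong (S5 (i - j).-1 j _ _) _ _; lia.
  - by rewrite hij; apply: Trefl.
have S6 : forall y, p <= y -> y < N -> T 0 y.
  move=> y hy hyN.
  apply: Tcong (cjT _ _ _ _ (S5' p.+1 y _ _ _ _) h2) _ _; try lia;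
    rewrite /sw; brute.
have S7 : forall x, x < p -> T x p.
  elim=> [|x IH] hx; first by apply: S6; lia.
  have hh : T x.+1 p.+1.
    apply: Tcong (cjC _ _ (IH _)) _ _; try lia; rewrite /fc; brute.
  apply: Tcong (cjT _ _ _ _ (S5' p.+1 p _ _ _ _) hh) _ _; try lia;
    rewrite /sw; brute.
have S8 : forall x y, x < p -> p <= y -> y < N -> T x y.
  move=> x y hx hy hyN.
  apply: Tcong (cjT _ _ _ _ (S5' p y _ _ _ _) (S7 x hx)) _ _; try lia;
    rewrite /sw; brute.
have S9 : forall x y, x < p -> y < p -> T x y.
  move=> x y hx hy; case: (eqVneq x y) => [->|hxy]; first exact: Trefl.
  apply: Tcong (cjT _ _ _ _ (S7 y hy) (S7 x hx)) _ _; try lia;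
    rewrite /sw; brute.
move=> x y hx hy.
case: (ltnP x p) => hxp; case: (ltnP y p) => hyp.
- exact: S9.
- exact: S8.
- apply: Tsym; exact: S8.
- exact: S5'.
Qed.

Lemma part2 : <<[set a; c]>> = [set: {perm 'I_N}].
Proof.
apply/eqP; rewrite eqEsubset subsetT /=; apply/subsetP => s _.
case: (prod_tpermP s) => ts -> _; apply: group_prod => -[u v] _ /=.
rewrite -(inord_val u) -(inord_val v); apply: allT; exact: ltn_ord.
Qed.

End Main.

Theorem mainTheorem12 (n p : nat) (hn : 7 <= n) (hp : prime p) (hodd : odd p)
    (hpn : p + 3 <= n) :
  (~ exists phi : {perm {perm 'I_n}},
       [/\ phi \in Aut [set: {perm 'I_n}],
           phi (elt_a n p) = ((elt_a n p)^-1)%g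
         & phi (elt_c n p) = ((elt_c n p)^-1)%g])
  /\ (<<[set elt_a n p; elt_c n p]>>%g = [set: {perm 'I_n}]).
Proof.
have hp3 : 3 <= p.
  have := prime_gt1 hp; case: p hp hodd {hpn} => [|[|[|q]]] //.
case: n hn hpn => [//|n] hn hpn.
split; [exact: part1 | exact: part2].
Qed.
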